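(* Let $\mathfrak{g}$ be a finite-dimensional complex Lie algebra admitting an inner CPA-structure $x\cdot y=[\phi(x),y]$ with $\phi$ a Lie algebra endomorphism of $\mathfrak{g}$. Then $\mathfrak{g}$ decomposes as a direct sum $\mathfrak{g}=\mathfrak{n}\oplus\mathfrak{h}$ of $\phi$-invariant ideals (ideals both of the Lie algebra and of the algebra $(\mathfrak{g},\cdot)$) such that: (1) $\phi|_{\mathfrak{n}}$ is a nilpotent endomorphism of $\mathfrak{n}$ and the induced CPA-structure on $\mathfrak{n}$ is nil-inner; (2) $\phi|_{\mathfrak{h}}$ is an automorphism of $\mathfrak{h}$, and $[[\mathfrak{h},\mathfrak{h}],[\mathfrak{h},\mathfrak{h}]]=0$.
   Context: A CPA-structure on a Lie algebra $\mathfrak{g}$ is a bilinear product $x\cdot y$ on $\mathfrak{g}$ satisfying, for all $x,y,z$: $x\cdot y=y\cdot x$; $[x,y]\cdot z=x\cdot(y\cdot z)-y\cdot(x\cdot z)$; $x\cdot[y,z]=[x\cdot y,z]+[y,x\cdot z]$. It is called inner if $x\cdot y=[\phi(x),y]$ for some Lie algebra homomorphism $\phi:\mathfrak{g}\to\mathfrak{g}$, and nil-inner if it can be written in this form with $\phi$ a nilpotent Lie algebra homomorphism. A subspace $I$ is an ideal if it is both a Lie ideal ($[\mathfrak{g},I]\subseteq I$) and an algebra ideal ($\mathfrak{g}\cdot I\subseteq I$). *)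

(* Defs.v *)
From HB Require Import structures.
From mathcomp Require Import all_boot all_order all_algebra.
From mathcomp Require Import reals.
From mathcomp Require Import complex.

Set Implicit Arguments.
Unset Strict Implicit.
Unset Printing Implicit Defensive.

Import Order.TTheory GRing.Theory Num.Theory.
Local Open Scope ring_scope.

Section Lie.
Variable (K : fieldType) (V : vectType K).
Implicit Types (br prod : V -> V -> V) (U W : {vspace V}).

Definition is_lie_bracket br : Prop :=
  [/\ (forall (a : K) x y z, br (a *: x + y) z = a *: br x z + br y z),
      (forall (a : K) x y z, br x (a *: y + z) = a *: br x y + br x z),
      (forall x, br x x = 0) &
      (forall x y z, br x (br y z) + br y (br z x) + br z (br x y) = 0)].

Definition lie_hom br (phi : {linear V -> V}) : Prop :=
  forall x y, phi (br x y) = br (phi x) (phi y).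

Definition is_CPA br prod : Prop :=
  [/\ (forall (a : K) x y z, prod (a *: x + y) z = a *: prod x z + prod y z),
      (forall (a : K) x y z, prod x (a *: y + z) = a *: prod x y + prod x z),
      (forall x y, prod x y = prod y x),
      (forall x y z, prod (br x y) z = prod x (prod y z) - prod y (prod x z)) &
      (forall x y z, prod x (br y z) = br (prod x y) z + br y (prod x z))].

Definition inner_prod br (phi : V -> V) : V -> V -> V :=
  fun x y => br (phi x) y.

Definition is_ideal br prod U : Prop :=
  (forall x y, y \in U -> br x y \in U) /\
  (forall x y, y \in U -> prod x y \in U).

Definition stable_by (phi : V -> V) U : Prop :=
  forall x, x \in U -> phi x \in U.

Definition nilpotent_on (phi : V -> V) U : Prop :=
  exists k : nat, forall x, x \in U -> iter k phi x = 0.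

Definition bij_on_space (phi : V -> V) U : Prop :=
  (forall x y, x \in U -> y \in U -> phi x = phi y -> x = y) /\
  (forall y, y \in U -> exists2 x, x \in U & phi x = y).

Definition nil_inner_on br prod U : Prop :=
  exists psi : {linear V -> V},
    [/\ stable_by psi U,
        (forall x y, x \in U -> y \in U -> psi (br x y) = br (psi x) (psi y)),
        nilpotent_on psi U &
        (forall x y, x \in U -> y \in U -> prod x y = br (psi x) y)].

(* [U, W] : the subspace spanned by all brackets [u, w], u in U, w in W
   (spanned by brackets of basis vectors, br being bilinear). *)
Definition lie_prod br U W : {vspace V} :=
  (<< [seq br u w | u <- vbasis U, w <- vbasis W] >>)%VS.

End Lie.

(* Main.v *)
Require Import Defs.
From HB Require Import structures.
From mathcomp Require Import all_boot all_order all_algebra.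
From mathcomp Require Import reals.
From mathcomp Require Import complex.
From mathcomp Require Import zify.
Import GRing.Theory Num.Theory.
Local Open Scope ring_scope.

Section Core.
Variables (R : realType) (V : vectType R[i]) (br : V -> V -> V)
  (phi : {linear V -> V}).
Hypothesis hL : is_lie_bracket br.
Hypothesis hH : lie_hom br phi.
Hypothesis hC : is_CPA br (inner_prod br phi).

Lemma br0l z : br 0 z = 0.
Proof.
have := hL; rewrite /is_lie_bracket => -[L1 _ _ _]; have := L1 1 0 0 z; rewrite !scale1r addr0 => e.
by have := congr1 (fun t => t - br 0 z) e; rewrite subrr addrK => <-.
Qed.
Lemma br0r z : br z 0 = 0.
Proof.
have := hL; rewrite /is_lie_bracket => -[_ L1 _ _]; have := L1 1 z 0 0; rewrite !scale1r addr0 => e.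
by have := congr1 (fun t => t - br z 0) e; rewrite subrr addrK => <-.
Qed.
Lemma brDl x y z : br (x + y) z = br x z + br y z.
Proof. by have := hL; rewrite /is_lie_bracket => -[L1 _ _ _]; have := L1 1 x y z; rewrite !scale1r. Qed.
Lemma brDr x y z : br z (x + y) = br z x + br z y.
Proof. by have := hL; rewrite /is_lie_bracket => -[_ L1 _ _]; have := L1 1 z x y; rewrite !scale1r. Qed.
Lemma brZl a x z : br (a *: x) z = a *: br x z.
Proof. by have := hL; rewrite /is_lie_bracket => -[L1 _ _ _]; have := L1 a x 0 z; rewrite !addr0 br0l addr0. Qed.
Lemma brZr a x z : br z (a *: x) = a *: br z x.
Proof. by have := hL; rewrite /is_lie_bracket => -[_ L1 _ _]; have := L1 a z x 0; rewrite !addr0 br0r addr0. Qed.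
Lemma brNl x z : br (- x) z = - br x z.
Proof. by rewrite -scaleN1r brZl scaleN1r. Qed.
Lemma brNr x z : br z (- x) = - br z x.
Proof. by rewrite -scaleN1r brZr scaleN1r. Qed.
Lemma anti x y : br x y = - br y x.
Proof.
have := hL; rewrite /is_lie_bracket => -[_ _ A _]; have := A (x + y).
rewrite brDl !brDr !A add0r addr0 => /eqP; rewrite addr_eq0 => /eqP e.
by rewrite e.
Qed.
Lemma S a b : br (phi a) b = - br a (phi b).
Proof.
have := hC; rewrite /is_CPA => -[_ _ Sy _ _]; have := Sy a b; rewrite /inner_prod => ->.
by rewrite anti.
Qed.
Lemma Jd w z t : br w (br z t) = br (br w z) t + br z (br w t).
Proof.
have := hL; rewrite /is_lie_bracket => -[_ _ _ J]; have := J w z t.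
rewrite (anti t (br w z)) (anti t w) brNr.
by move/eqP; rewrite -addrA -opprD subr_eq0 => /eqP ->; rewrite addrC.
Qed.

Lemma Jd2 p q c : br (br p q) c = br p (br q c) - br q (br p c).
Proof. by rewrite (Jd p q c) addrK. Qed.
Lemma f1 x y c : br (phi x) (br (phi y) c) = - br x (br y (phi (phi (phi c)))).
Proof. by rewrite (S x) hH S S !brNr opprK. Qed.
Lemma C1 a b c : br (br a b) (phi c) = br (br a b) (phi (phi (phi c))).
Proof.
have e := S (br a b) c.
rewrite hH Jd2 !f1 in e.
apply: oppr_inj; rewrite -e (Jd2 a b).
by rewrite opprB opprK addrC.
Qed.
Lemma C2 a b t0 : phi (br (br a b) (phi t0)) = - br (br a b) (phi t0).
Proof. by rewrite hH S -C1. Qed.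
Lemma E2 z e : phi e = - e -> br (phi (phi z)) e = br z e.
Proof. by move=> he; rewrite S S opprK he linearN he opprK. Qed.
Lemma I1 a b z0 t0 : br (br a b) (br (phi (phi (phi z0))) (phi t0))
  = br (br a b) (br (phi z0) (phi t0)).
Proof.
rewrite !(Jd (br a b)) -C1 (E2 (phi z0) _ (C2 a b t0)) //.
Qed.
Lemma I2 a b z0 t0 : br (br a b) (br (phi z0) (phi (phi (phi t0))))
  = br (br a b) (br (phi z0) (phi t0)).
Proof.
by rewrite (anti (phi z0) (phi (phi (phi t0)))) (anti (phi z0) (phi t0)) !brNr I1.
Qed.
Lemma II a b z0 t0 : br (phi (br a b)) (br (phi z0) (phi t0))
  = br (br a b) (br (phi z0) (phi t0)).
Proof. by rewrite S hH (S (phi z0) (phi (phi t0))) brNr opprK I2. Qed.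
Lemma I3 p0 r0 z0 t0 :
  br (br (phi (phi (phi p0))) (phi r0)) (br (phi z0) (phi t0))
  = br (br (phi p0) (phi r0)) (br (phi z0) (phi t0)).
Proof.
by rewrite (anti (br (phi (phi (phi p0))) (phi r0))) (anti (br (phi p0) (phi r0))) I1.
Qed.
Lemma U0 x2 y z0 t0 : br (br (phi (phi x2)) y) (br (phi z0) (phi t0)) = 0.
Proof.
set U := br (br (phi (phi x2)) y) (br (phi z0) (phi t0)).
have e : U = - U.
  rewrite {1}/U (S (phi x2) y) brNl; congr (- _).
  by rewrite -(I3 x2 y z0 t0) -(hH (phi (phi x2)) y) II.
have : (2%:R : R[i]) *: U = 0 by rewrite scaler_nat mulr2n {1}e addNr.
by move/eqP; rewrite scaler_eq0 pnatr_eq0 /= => /eqP.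
Qed.

Lemma S' x w : br x (phi w) = - br (phi x) w.
Proof. by rewrite S opprK. Qed.
Lemma iterH k a b : iter k phi (br a b) = br (iter k phi a) (iter k phi b).
Proof. by elim: k => //= k ->; rewrite hH. Qed.
Lemma Sk k x v : br x (iter k phi v) = (-1) ^+ k *: br (iter k phi x) v.
Proof.
elim: k x => [|k IH] x /=; first by rewrite expr0 scale1r.
by rewrite S' IH -iterSr exprS mulN1r scaleNr.
Qed.

Lemma brsuml m (F : 'I_m -> V) q : br (\sum_i F i) q = \sum_i br (F i) q.
Proof. exact: (big_morph (fun p => br p q) (fun x y => brDl x y q) (br0l q)). Qed.
Lemma brsumr m (F : 'I_m -> V) q : br q (\sum_i F i) = \sum_i br q (F i).
Proof. exact: (big_morph (fun p => br q p) (fun x y => brDr x y q) (br0r q)). Qed.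
Lemma inspan (A : seq V) v : v \in <<A>>%VS ->
  exists c : 'I_(size A) -> R[i], v = \sum_i c i *: A`_i.
Proof. move=> hv; exists (fun i => coord (in_tuple A) i v); exact: (@coord_span _ _ _ (in_tuple A) v hv). Qed.

Definition f : 'End(V) := linfun phi.
Definition fk k : 'End(V) := iter k (fun g => f \o g)%VF \1%VF.
Lemma fkE k x : fk k x = iter k phi x.
Proof.
elim: k => [|k IH] /=; first by rewrite id_lfunE.
by rewrite comp_lfunE lfunE IH.
Qed.
Definition Im k := limg (fk k).
Lemma Im_comp k : Im k.+1 = (f @: Im k)%VS.
Proof. by rewrite /Im /= limg_comp. Qed.
Lemma ImP k x : reflect (exists u, x = iter k phi u) (x \in Im k).
Proof.
rewrite /Im; apply: (iffP memv_imgP) => [[u _ ->]|[u ->]]; first by exists u; rewrite fkE.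
by exists u; rewrite ?memvf ?fkE.
Qed.
Lemma ImS k : (Im k.+1 <= Im k)%VS.
Proof.
apply/subvP => x /ImP [u ->]; apply/ImP; exists (phi u); by rewrite iterSr.
Qed.
Lemma dimdec m : (forall k, (k < m)%N -> Im k.+1 != Im k) ->
  (\dim (Im m) + m <= \dim (Im 0))%N.
Proof.
elim: m => [|m IH] H; first by rewrite addn0.
have := IH (fun k hk => H k (ltnW hk)).
have := H m (ltnSn m); rewrite eqEdim ImS /= -ltnNge.
lia.
Qed.
Lemma stab : exists k0, Im k0.+1 = Im k0.
Proof.
set d := \dim (Im 0).
case: (boolP [exists k : 'I_(d.+2), Im k.+1 == Im k]) => [/existsP [k /eqP e] | /existsPn H].
  by exists k.
exfalso; have := @dimdec d.+2 (fun k (hk : (k < d.+2)%N) => H (Ordinal hk)); lia.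
Qed.

Lemma main : exists n h : {vspace V},
    [/\ (n + h)%VS = fullv /\ (n :&: h)%VS = 0%VS,
        is_ideal br (inner_prod br phi) n /\ is_ideal br (inner_prod br phi) h,
        stable_by phi n /\ stable_by phi h,
        nilpotent_on phi n /\ nil_inner_on br (inner_prod br phi) n &
        bij_on_space phi h /\
          lie_prod br (lie_prod br h h) (lie_prod br h h) = 0%VS].
Proof.
have [k0 ek] := stab.
have ImK j : Im (j + k0) = Im k0.
  elim: j => // j IH; by rewrite addSn Im_comp IH -Im_comp ek.
pose N := k0.+2.
have hN : Im N = Im k0 by rewrite -(ImK 2).
have hN1 : Im N.+1 = Im k0 by rewrite -(ImK 3).
have h2N : Im (N + N) = Im k0 by rewrite -(ImK (k0.+4)) addnS addSn !addnS.
pose n := lker (fk N); pose h := Im N.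
have nP x : (x \in n) = (iter N phi x == 0) by rewrite memv_ker fkE.
have stabh : stable_by phi h.
  by move=> x /ImP [u ->]; apply/ImP; exists (phi u); rewrite iterSr.
have stabn : stable_by phi n.
  by move=> x; rewrite !nP => /eqP e; rewrite -iterSr iterS e linear0.
have cap0 : (h :&: lker f = 0)%VS.
  have := limg_ker_dim f h; rewrite -Im_comp /h hN1 hN => /eqP.
  by rewrite -{2}[\dim (Im k0)]add0n eqn_add2r dimv_eq0 => /eqP.
have injh : forall x, x \in h -> phi x = 0 -> x = 0.
  move=> x xh e; apply/eqP; rewrite -memv0 -cap0 memv_cap xh memv_ker lfunE /=.
  by rewrite e.
have nilh : forall j x, x \in h -> iter j phi x = 0 -> x = 0.
  elim=> [|j IH] x xh; first by [].
  rewrite iterSr => e; have e2 := IH _ (stabh _ xh) e; exact: injh xh e2.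
have nh0 : (n :&: h)%VS = 0%VS.
  apply/eqP; rewrite -subv0; apply/subvP => x; rewrite memv_cap nP memv0.
  by case/andP => /eqP e xh; rewrite (nilh _ _ xh e).
have nhf : (n + h)%VS = fullv.
  apply/eqP; rewrite eqEdim subvf /=.
  have := dimv_sum_cap n h; rewrite nh0 dimv0 addn0 => ->.
  by have := limg_ker_dim (fk N) fullv; rewrite capfv addnC => ->.
have iterhom k : forall x y, iter k phi (br x y) = br (iter k phi x) (iter k phi y).
  exact: iterH.
have nLie : forall x y, y \in n -> br x y \in n.
  by move=> x y; rewrite !nP iterH => /eqP ->; rewrite br0r.
have hLie : forall x y, y \in h -> br x y \in h.
  move=> x y; rewrite {1}/h hN -h2N => /ImP [u ->]; rewrite iterD Sk -iterH.
  by apply: memvZ; apply/ImP; exists (br x u).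
have LPz : forall p q, p \in lie_prod br h h -> q \in lie_prod br h h -> br p q = 0.
  have memh x : x \in h -> exists z0, x = phi (phi (iter k0 phi z0)).
    by move/ImP => [u ->]; exists u.
  have core u w u' w' : u \in h -> w \in h -> u' \in h -> w' \in h ->
      br (br u w) (br u' w') = 0.
    by move=> /memh [a ->] _ /memh [c ->] /memh [e ->]; exact: U0.
  move=> p q; rewrite /lie_prod => hp hq.
  have [c ->] := inspan _ _ hp; have [d ->] := inspan _ _ hq.
  rewrite brsuml big1 // => i _; rewrite brZl brsumr big1 ?scaler0 // => j _.
  rewrite brZr.
  have /allpairsP [[u w] [hu hw ->]] := mem_nth 0 (ltn_ord i).
  have /allpairsP [[u' w'] [hu' hw' ->]] := mem_nth 0 (ltn_ord j).
  by rewrite core ?scaler0 // vbasis_mem.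
exists n, h; split.
- by [].
- by split; split => // x y yin; rewrite /inner_prod; first [exact: nLie | exact: hLie].
- by [].
- split; first by exists N => x; rewrite nP => /eqP.
  exists phi; split => //; first by exists N => x; rewrite nP => /eqP.
- split; last first.
    apply/eqP; rewrite -subv0; apply/span_subvP => v /allpairsP [[p q] [hp hq ->]] /=.
    by rewrite memv0 LPz // vbasis_mem.
  split.
    move=> x y xh yh e; apply/eqP; rewrite -subr_eq0; apply/eqP; apply: injh.
      by rewrite memvB.
    by rewrite linearB e subrr.
  move=> y; rewrite {1}/h hN -hN1 => /ImP [u ->]; exists (iter N phi u) => //.
  by apply/ImP; exists u.
Qed.
End Core.

Theorem theorem2p14 (R : realType) (V : vectType R[i])
    (br : V -> V -> V) (phi : {linear V -> V}) :
  is_lie_bracket br ->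
  lie_hom br phi ->
  is_CPA br (inner_prod br phi) ->
  exists n h : {vspace V},
    [/\ (n + h)%VS = fullv /\ (n :&: h)%VS = 0%VS,
        is_ideal br (inner_prod br phi) n /\ is_ideal br (inner_prod br phi) h,
        stable_by phi n /\ stable_by phi h,
        nilpotent_on phi n /\ nil_inner_on br (inner_prod br phi) n &
        bij_on_space phi h /\
          lie_prod br (lie_prod br h h) (lie_prod br h h) = 0%VS].
Proof. exact: main. Qed.
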